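(* Let $G=G_1\times\cdots\times G_m$ be a direct product of virtually torsion-free groups. Suppose there exist $\alpha,\beta>0$ such that for every $i\in\{1,\dots,m\}$ and every finite $V_i\subset G_i$ such that $\langle V_i\rangle$ has exponential growth, $|V_i^n|\geqslant(\alpha|V_i|)^{\beta n}$ for every $n\in\mathbb{N}$. Then there exist $\alpha',\beta'>0$ such that for every finite $U\subset G$ at least one of the following holds: 1. $\langle U\rangle$ is contained in a direct product of the form $H_1\times H_2$, where $H_2$ does not have exponential growth and the restriction to $\langle U\rangle$ of the projection to $H_1$ is infinite-to-1; 2. $|U^n|\geqslant(\alpha'|U|)^{\beta' n}$ for every $n\in\mathbb{N}$.
   Context: For a finitely generated group $H$ with finite generating set $S$, $H$ has exponential growth if $\lim_{n\to\infty}|B_S(n)|^{1/n}>1$, where $B_S(n)$ is the word-metric ball; a group not assumed finitely generated does not have exponential growth if none of its finitely generated subgroups does. A homomorphism is infinite-to-1 if its kernel is infinite. $U^n=\{u_1\cdots u_n:u_i\in U\}$. *)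

(* Defs.v *)
From HB Require Import structures.
From mathcomp Require Import all_boot monoid finmap ssralg ssrnum.
From mathcomp Require Import all_classical all_reals exp Rstruct Rstruct_topology.
From mathcomp Require Import topology normedtype sequences.
From Stdlib Require Import Rdefinitions.

Set Implicit Arguments.
Unset Strict Implicit.
Unset Printing Implicit Defensive.

Local Open Scope group_scope.

Section Product.
Variables (m : nat) (Gs : 'I_m -> groupType).

Definition prodG := {dffun forall i : 'I_m, Gs i}.
HB.instance Definition _ := Choice.on prodG.

Definition prod_one : prodG := [ffun i => 1].
Definition prod_inv (x : prodG) : prodG := [ffun i => (x i)^-1].
Definition prod_mul (x y : prodG) : prodG := [ffun i => x i * y i].

Fact prod_mulA : associative prod_mul.
Proof. by move=> x y z; apply/ffunP => i; rewrite !ffunE mulgA. Qed.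
Fact prod_mul1 : left_id prod_one prod_mul.
Proof. by move=> x; apply/ffunP => i; rewrite !ffunE mul1g. Qed.
Fact prod_mulg1 : right_id prod_one prod_mul.
Proof. by move=> x; apply/ffunP => i; rewrite !ffunE mulg1. Qed.
Fact prod_mulV : left_inverse prod_one prod_inv prod_mul.
Proof. by move=> x; apply/ffunP => i; rewrite !ffunE mulVg. Qed.
Fact prod_mulgV : right_inverse prod_one prod_inv prod_mul.
Proof. by move=> x; apply/ffunP => i; rewrite !ffunE mulgV. Qed.

HB.instance Definition _ :=
  isGroup.Build prodG prod_mulA prod_mul1 prod_mulg1 prod_mulV prod_mulgV.
End Product.

Section Groups.
Variable G : groupType.
Local Open Scope classical_set_scope.

Definition is_subgroup (H : set G) : Prop :=
  H 1 /\ (forall x y, H x -> H y -> H (x * y)) /\ (forall x, H x -> H x^-1).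

Definition gen (A : set G) : set G :=
  [set x | forall H : set G, is_subgroup H -> A `<=` H -> H x].

Definition torsion_free (H : set G) : Prop :=
  forall x (n : nat), H x -> (0 < n)%N -> x ^+ n = 1 -> x = 1.

Definition finite_index (H : set G) : Prop :=
  exists s : seq G, forall g : G, exists2 t, t \in s & H (t^-1 * g).

Definition virtually_torsion_free : Prop :=
  exists H : set G, [/\ is_subgroup H, finite_index H & torsion_free H].

Local Open Scope fset_scope.

Definition fset_mul (A B : {fset G}) : {fset G} :=
  [fset x * y | x in A, y in B].

Fixpoint fset_pow (U : {fset G}) (n : nat) : {fset G} :=
  if n is n'.+1 then fset_mul U (fset_pow U n') else [fset 1].

Definition ball_gen (S : {fset G}) (n : nat) : {fset G} :=
  fset_pow (S `|` [fset x^-1 | x in S] `|` [fset 1]) n.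

Local Open Scope ring_scope.
Definition fg_exp_growth (S : {fset G}) : Prop :=
  exists l : R, 1 < l /\
    (fun n : nat => powR (#|` ball_gen S n|%:R : R) (n%:R)^-1) @ \oo --> l.
Local Close Scope ring_scope.

(* A (not necessarily finitely generated) subgroup H has exponential
   growth iff some finitely generated subgroup of it does. *)
Definition has_exp_growth (H : set G) : Prop :=
  exists S : {fset G}, (forall x, x \in S -> H x) /\ fg_exp_growth S.

End Groups.

Arguments fset_pow {G}.
Arguments gen {G}.

(* Main.v *)
Require Import Defs.
From HB Require Import structures.
From mathcomp Require Import all_boot monoid finmap ssralg ssrnum.
From mathcomp Require Import all_classical all_reals exp Rstruct Rstruct_topology.
From Stdlib Require Import Rdefinitions.
From mathcomp Require Import order archimedean topology normedtype sequences.
From mathcomp Require Import ring lra.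

Set Implicit Arguments.
Unset Strict Implicit.
Unset Printing Implicit Defensive.

Import Order.TTheory GRing.Theory Num.Theory.

Module PA.


Local Open Scope fset_scope.

Lemma size_enum_fset (K : choiceType) (C : {fset K}) :
  size (enum_finmem (mem_fin (fin_finpred C))) = #|` C|.
Proof.
apply/perm_size/uniq_perm; [exact: enum_finmem_uniq| exact: fset_uniq | ].
by move=> x; rewrite enum_finmemE.
Qed.

Lemma card_imfset_le (K K' : choiceType) (f : K -> K') (C : {fset K}) :
  #|` [fset f x | x in C]| <= #|` C|.
Proof. by rewrite (leq_trans (leq_imfset_card _ _ _)) // size_enum_fset. Qed.

Section GroupLemmas.
Variable G : groupType.
Local Open Scope group_scope.
Implicit Types A B U T : {fset G}.

Lemma in_fset_mulP A B x :
  reflect (exists a b, [/\ a \in A, b \in B & x = a * b]) (x \in fset_mul A B).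
Proof.
apply: (iffP idP).
  by case/imfset2P => a aA [b bB ->]; exists a, b.
by case=> a [b [aA bB ->]]; apply: in_imfset2.
Qed.

Lemma card_fset_mul A B : (#|` fset_mul A B| <= #|` A| * #|` B|)%nat.
Proof.
rewrite /fset_mul unlock size_seq_fset (leq_trans (size_undup _)) //.
by rewrite size_allpairs !size_enum_fset.
Qed.

Lemma fset_mulA A B C : fset_mul A (fset_mul B C) = fset_mul (fset_mul A B) C.
Proof.
apply/fsetP => x; apply/in_fset_mulP/in_fset_mulP.
  case=> a [y [aA /in_fset_mulP [b [c [bB cC ->]]] ->]].
  by exists (a * b), c; split => //; [apply/in_fset_mulP; exists a, b | rewrite mulgA].
case=> y [c [/in_fset_mulP [a [b [aA bB ->]]] cC ->]].
by exists a, (b * c); split => //; [apply/in_fset_mulP; exists b, c | rewrite mulgA].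
Qed.

Lemma fset_mul1 A : fset_mul [fset 1] A = A.
Proof.
apply/fsetP => x; apply/in_fset_mulP/idP.
  by case=> a [b []]; rewrite inE => /eqP -> bA ->; rewrite mul1g.
by move=> xA; exists 1, x; rewrite inE mul1g.
Qed.

Lemma fset_pow_add U (n k : nat) :
  fset_pow U (n + k)%nat = fset_mul (fset_pow U n) (fset_pow U k).
Proof.
elim: n => [|n IH] /=; first by rewrite fset_mul1.
by rewrite IH fset_mulA.
Qed.

Lemma card_fset_pow_mul U (j k : nat) :
  (#|` fset_pow U (j * k)| <= expn #|` fset_pow U k| j)%nat.
Proof.
elim: j => [|j IH]; first by rewrite mul0n /= cardfs1.
rewrite mulSn fset_pow_add expnS (leq_trans (card_fset_mul _ _)) //.
by rewrite leq_mul2l IH orbT.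
Qed.

Lemma one_in_fset_pow U n : 1 \in U -> 1 \in fset_pow U n.
Proof.
move=> U1; elim: n => [|n IH] /=; first by rewrite inE.
by apply/in_fset_mulP; exists 1, 1; rewrite mulg1.
Qed.

Lemma fset_pow_mono U (n d : nat) : 1 \in U -> fset_pow U n `<=` fset_pow U (d + n)%nat.
Proof.
move=> U1; elim: d => [|d IH] //=.
apply/fsubsetP => x /(fsubsetP IH) xin.
by apply/in_fset_mulP; exists 1, x; rewrite mul1g.
Qed.

Lemma card_fset_pow_gt0 U n : 1 \in U -> (0 < #|` fset_pow U n|)%nat.
Proof. by move=> U1; rewrite cardfs_gt0; apply/fset0Pn; exists 1; apply: one_in_fset_pow. Qed.

Local Open Scope classical_set_scope.

Lemma fset_pow_sub (H : set G) U n :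
  is_subgroup H -> (forall x, x \in U -> H x) ->
  forall x, x \in fset_pow U n -> H x.
Proof.
case=> H1 [HM HV] UH; elim: n => [|n IH] x /=; first by rewrite inE => /eqP ->.
by case/in_fset_mulP => a [b [aU bP ->]]; apply: HM; [apply: UH| apply: IH].
Qed.

Lemma gen_subgroup (A : set G) : is_subgroup (gen A).
Proof.
split; first by move=> H [].
split; first by move=> x y gx gy H hH AH; case: (hH) => _ [hM _]; apply: hM; [apply: gx|apply: gy].
by move=> x gx H hH AH; case: (hH) => _ [_ hV]; apply: hV; apply: gx.
Qed.

Lemma gen_sub (A : set G) : A `<=` gen A.
Proof. by move=> x Ax H _ AH; apply: AH. Qed.

Lemma gen_min (A H : set G) : is_subgroup H -> A `<=` H -> gen A `<=` H.
Proof. by move=> hH AH x gx; apply: gx. Qed.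

End GroupLemmas.

Section HomLemmas.
Variables (G G' : groupType) (f : G -> G').
Hypothesis fM : forall x y, f (x * y)%g = (f x * f y)%g.
Hypothesis f1 : f 1%g = 1%g.
Local Open Scope group_scope.

Lemma fset_pow_hom (U : {fset G}) (U' : {fset G'}) n :
  (forall u, u \in U -> f u \in U') ->
  forall x, x \in fset_pow U n -> f x \in fset_pow U' n.
Proof.
move=> UU'; elim: n => [|n IH] x /=; first by rewrite !inE => /eqP ->; rewrite f1.
case/in_fset_mulP => a [b [aU bP ->]]; apply/in_fset_mulP.
by exists (f a), (f b); rewrite fM; split => //; [apply: UU' | apply: IH].
Qed.

Lemma fset_pow_hom_onto (U : {fset G}) n y :
  y \in fset_pow [fset f u | u in U] n -> exists2 x, x \in fset_pow U n & y = f x.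
Proof.
elim: n y => [|n IH] y /=; first by rewrite !inE => /eqP ->; exists 1; rewrite ?inE.
case/in_fset_mulP => a [b [/imfsetP [u /= uU ->] /IH [x xP ->] ->]].
by exists (u * x) => //; apply/in_fset_mulP; exists u, x.
Qed.

Lemma card_fset_pow_hom (U : {fset G}) n :
  (#|` fset_pow [fset f u | u in U] n| <= #|` fset_pow U n|)%nat.
Proof.
apply: leq_trans (card_imfset_le f (fset_pow U n)).
apply: fsubset_leq_card; apply/fsubsetP => y /fset_pow_hom_onto [x xP ->].
by apply/imfsetP; exists x.
Qed.

End HomLemmas.

End PA.
Import PA.

Module PB.


Local Open Scope ring_scope.

Section Fekete.
Variables (G : groupType) (S : {fset G}).

Let T := (S `|` [fset (x^-1)%g | x in S] `|` [fset 1%g])%fset.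
Let T1 : (1%g \in T).
Proof. by rewrite !inE eqxx !orbT. Qed.

Definition ballc (n : nat) : R := (#|` ball_gen S n|)%:R.

Lemma ballc_ge1 n : 1 <= ballc n.
Proof. by rewrite /ballc ler1n; apply: card_fset_pow_gt0. Qed.

Lemma ballc_gt0 n : 0 < ballc n.
Proof. exact: lt_le_trans (ballc_ge1 n). Qed.

Lemma ballc_fek (k n : nat) : (0 < k)%nat -> ballc n <= ballc k ^+ (n %/ k).+1.
Proof.
move=> k0; rewrite /ballc -natrX ler_nat.
have hle : (n <= (n %/ k).+1 * k)%nat by apply: ltnW; apply: ltn_ceil.
apply: leq_trans (card_fset_pow_mul _ _ _).
rewrite -(subnK hle); apply: fsubset_leq_card; exact: fset_pow_mono.
Qed.

Lemma ln_fek (k n : nat) : (0 < k)%nat ->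
  ln (ballc n) <= ((n %/ k).+1)%:R * ln (ballc k).
Proof.
move=> k0; rewrite mulr_natl -lnXn ?ballc_gt0 //.
by rewrite ler_ln ?posrE ?exprn_gt0 ?ballc_gt0 // ballc_fek.
Qed.

Definition gballc (n : nat) := ln (ballc n) / n%:R.

Lemma gseq_ge0 n : 0 <= gballc n.
Proof. by rewrite /gballc divr_ge0 // ln_ge0 // ballc_ge1. Qed.

Lemma gseqE n : (0 < n)%nat -> ln (ballc n) = gballc n * n%:R.
Proof. by move=> n0; rewrite /gballc divfK // pnatr_eq0 -lt0n. Qed.

Lemma ub_fek (k : nat) (d : R) : (0 < k)%nat -> 0 < d ->
  exists N, forall n, (N <= n)%nat -> ln (ballc n) <= (gballc k + d) * n%:R.
Proof.
move=> k0 d0; set L := ln (ballc k).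
have L0 : 0 <= L by rewrite ln_ge0 // ballc_ge1.
exists (Num.bound (L / d)) => n hn.
have hb : L / d < n%:R.
  apply: lt_le_trans (archi_boundP _) _; first by rewrite divr_ge0 // ltW.
  by rewrite ler_nat.
have hb' : L < d * n%:R by rewrite -ltr_pdivrMl // mulrC.
have hq : (n %/ k)%:R * L <= n%:R * gballc k.
  have -> : n%:R * gballc k = n%:R / k%:R * L by rewrite /gballc -/L mulrA mulrAC.
  rewrite ler_wpM2r // ler_pdivlMr ?ltr0n // -natrM ler_nat; exact: leq_divM.
apply: le_trans (ln_fek n k0) _.
rewrite -addn1 natrD mulrDl mul1r.
have : n%:R * gballc k = gballc k * n%:R by rewrite mulrC.
move: hq hb'; set q := (n %/ k)%:R * L; set w := n%:R * gballc k.
move=> hq hb' hw.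
rewrite mulrDl -hw.
apply: lerD => //; exact: ltW.
Qed.

Definition gset := [set gballc k | k in [set k : nat | (0 < k)%nat]]%classic.
Definition glam := inf gset.

Lemma gset_lb : has_lbound gset.
Proof. by exists 0 => x [k _ <-]; apply: gseq_ge0. Qed.

Lemma gset_ne : (gset !=set0)%classic.
Proof. by exists (gballc 1); exists 1%nat. Qed.

Lemma glam_le n : (0 < n)%nat -> glam <= gballc n.
Proof. by move=> n0; apply: ge_inf; [exact: gset_lb | exists n]. Qed.

Lemma glam_ge0 : 0 <= glam.
Proof. by apply: lb_le_inf; [exact: gset_ne| move=> x [k _ <-]; apply: gseq_ge0]. Qed.

Lemma glam_ub (d : R) : 0 < d ->
  exists N, forall n, (N <= n)%nat -> gballc n <= glam + d.
Proof.
move=> d0.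
have [x [k k0 <-] hk] := inf_adherent (divr_gt0 d0 (ltr0n R 2)) (conj gset_ne gset_lb).
have [N hN] := ub_fek k0 (divr_gt0 d0 (ltr0n R 2)).
exists (maxn N 1) => n; rewrite geq_max => /andP [hn n0].
have := hN n hn; rewrite gseqE // ler_pM2r ?ltr0n // => h.
apply: (le_trans h); rewrite -/glam in hk.
have : gballc k + d / 2 < glam + d / 2 + d / 2 by rewrite ltrD2r.
by rewrite -addrA -splitr => /ltW.
Qed.

Lemma fekete_main : ~ fg_exp_growth S -> forall e : R, 0 < e ->
  exists N, forall n, (N <= n)%nat -> ln (ballc n) <= e * n%:R.
Proof.
move=> nexp e e0.
case: (ltrP 0 glam) => hl; last first.
  have [N hN] := glam_ub e0; exists (maxn N 1) => n; rewrite geq_max => /andP[hn n0].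
  rewrite gseqE // ler_pM2r ?ltr0n //.
  apply: (le_trans (hN n hn)); rewrite -[X in _ <= X]add0r lerD2r //.
exfalso; apply: nexp; exists (expR glam); split; first by rewrite expR_gt1.
have -> : (fun n : nat => powR (#|` ball_gen S n|%:R : R) (n%:R)^-1) = expR \o gballc.
  apply: funext => n /=; rewrite /powR -/(ballc n) (negbTE (lt0r_neq0 (ballc_gt0 n))).
  by rewrite /gballc mulrC.
apply: continuous_cvg; first exact: continuous_expR.
apply/(@cvgrPdist_le _ R^o) => eps eps0.
have [N hN] := glam_ub eps0.
exists (maxn N 1) => // n /=; rewrite geq_max => /andP[hn n0].
rewrite distrC ger0_norm ?subr_ge0 ?glam_le // lerBlDr addrC; exact: hN.
Qed.

End Fekete.

End PB.
Import PB.

Module PC.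



Lemma card_fset_fin (T : finType) (B : {fset T}) : (#|` B| <= #|T|)%nat.
Proof. by rewrite -(card_uniqP (fset_uniq B)) max_card. Qed.

Lemma inj_count (K : choiceType) (m : nat) (A : {fset K}) (c : K -> 'I_m -> nat) (N : nat) :
  {in A &, forall x y, (forall i, c x i = c y i) -> x = y} ->
  (forall x, x \in A -> forall i, (c x i < N)%nat) -> (#|` A| <= expn N m)%nat.
Proof.
move=> cinj cN.
have p1 : (0 < maxn N 1)%nat by rewrite leq_max orbT.
pose code x := [ffun i => insubd (Ordinal p1) (c x i) : 'I_(maxn N 1)].
have hle : (#|` A| <= expn (maxn N 1) m)%nat.
  have <- : #|` [fset code x | x in A]%fset| = #|` A|.
    apply: card_in_imfset => x y xA yA /ffunP hxy; apply: cinj => // i.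
    have hc z : z \in A -> (c z i < maxn N 1)%nat.
      by move=> zA; rewrite (leq_trans (cN _ zA i)) // leq_max leqnn.
    have := hxy i; rewrite !ffunE => /(congr1 val). rewrite !insubdK //; exact: hc.
  by rewrite (leq_trans (card_fset_fin _)) // card_ffun !card_ord.
case: m c cinj cN code hle => [|m] c cinj cN code hle; first by rewrite !expn0 in hle *.
case: N cN p1 code hle => [|N] cN p1 code hle.
  case: (fset_0Vmem A) => [->|[x xA]]; first by rewrite cardfs0.
  by have := cN x xA ord0.
by rewrite (maxn_idPl _) in hle.
Qed.

Section Prod.
Variables (m : nat) (Gs : 'I_m -> groupType).
Local Notation PG := (prodG Gs).

Lemma prodM (x y : PG) i : (x * y)%g i = (x i * y i)%g.
Proof. by rewrite /= ffunE. Qed.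
Lemma prod1 i : (1%g : PG) i = 1%g.
Proof. by rewrite /= ffunE. Qed.
Lemma prodV (x : PG) i : (x^-1)%g i = ((x i)^-1)%g.
Proof. by rewrite /= ffunE. Qed.
Lemma prodX (x : PG) n i : (x ^+ n)%g i = ((x i) ^+ n)%g.
Proof. by elim: n => [|n IH]; rewrite ?expg0 ?prod1 // !expgS prodM IH. Qed.
Lemma prod_eq (x y : PG) : (forall i, x i = y i) -> x = y.
Proof. by move=> h; apply/ffunP. Qed.


Local Open Scope ring_scope.

Definition H2set (I : {set 'I_m}) (Vs : forall i, {fset Gs i}) : set PG :=
  [set x : PG | forall i, (i \in I -> x i = 1%g) /\
                          (i \notin I -> gen [set y | y \in Vs i] (x i))]%classic.

Lemma H2_subgroup (I : {set 'I_m}) (Vs : forall i, {fset Gs i}) : is_subgroup (H2set I Vs).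
Proof.
split; first by move=> i; rewrite prod1; split => // _; case: (gen_subgroup [set y | y \in Vs i]%classic).
split.
  move=> x y hx hy i; rewrite prodM; have [hx1 hx2] := hx i; have [hy1 hy2] := hy i.
  split; first by move=> iI; rewrite hx1 ?hy1 ?mulg1.
  move=> iI; case: (gen_subgroup [set y | y \in Vs i]%classic) => _ [hM _].
  by apply: hM; [apply: hx2|apply: hy2].
move=> x hx i; rewrite prodV; have [hx1 hx2] := hx i.
split; first by move=> iI; rewrite hx1 ?invg1.
move=> iI; case: (gen_subgroup [set y | y \in Vs i]%classic) => _ [_ hV].
by apply: hV; apply: hx2.
Qed.

Lemma H2_noexp (I : {set 'I_m}) (Vs : forall i, {fset Gs i}) :
  (forall i, i \notin I -> ~ has_exp_growth (gen [set y | y \in Vs i]%classic)) ->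
  ~ has_exp_growth (H2set I Vs).
Proof.
move=> hK [S [SH [l [l1 hcv]]]].
set c := (1 + l) / 2.
have c1 : 1 < c by rewrite /c; lra.
have lc : 0 < l - c by rewrite /c; lra.
have := (@cvgrPdist_lt _ R^o _ _ _ _ _).1 hcv (l - c) lc.
case => N0 _ hN0.
have H2s := H2_subgroup I Vs.
have hlow n : (N0 <= n)%nat -> (0 < n)%nat -> ln c * n%:R < ln (ballc S n).
  move=> hn n0; have := hN0 n hn; rewrite /= /powR -/(ballc S n).
  rewrite (negbTE (lt0r_neq0 (ballc_gt0 S n))) mulrC -/(gballc S n) => hd.
  have hc : c < expR (gballc S n).
    move: hd; rewrite ltr_norml => /andP [_]; lra.
  rewrite gseqE // ltr_pM2r ?ltr0n //.
  rewrite -ltr_ln ?posrE ?expR_gt0 ?(lt_trans ltr01 c1) // in hc.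
  by rewrite expRK in hc.
pose Sj j := [fset (x : PG) j | x in S]%fset.
have nfg j : j \notin I -> ~ fg_exp_growth (Sj j).
  move=> jI hfg; apply: (hK j jI); exists (Sj j); split => //.
  by move=> y /imfsetP [x /= xS ->]; exact: (SH x xS j).2 jI.
set e := ln c / (m.+1)%:R.
have e0 : 0 < e by rewrite /e divr_gt0 ?ltr0n // ln_gt0.
have hF j : exists N, j \notin I -> forall n, (N <= n)%nat -> ln (ballc (Sj j) n) <= e * n%:R.
  case: (boolP (j \in I)) => jI; first by exists 0%nat.
  by have [N hN] := fekete_main (nfg j jI) e0; exists N.
have [Nf hNf] := boolp.choice hF.
set n := maxn (maxn N0 (\max_j Nf j)%nat) 1.
pose W j := if j \in I then [fset 1%g]%fset else ball_gen (Sj j) n.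
have hbox x : x \in ball_gen S n -> forall j, x j \in W j.
  move=> xb j; rewrite /W.
  have xH2 : H2set I Vs x.
    apply: (fset_pow_sub H2s _ xb) => u; rewrite !inE => /orP [/orP [uS|/imfsetP [v /= vS ->]]|/eqP ->].
    - exact: SH.
    - by case: H2s => _ [_ hV]; apply: hV; apply: SH.
    - by case: H2s.
  case: ifP => jI; first by rewrite (xH2 j).1 // inE.
  apply: (fset_pow_hom (f := fun x : PG => x j) (fun x y : PG => prodM x y j) (prod1 j) _ xb).
  move=> u; rewrite !inE => /orP [/orP [uS|/imfsetP [v /= vS ->]]|/eqP ->].
  - by rewrite (_ : u j \in Sj j) // /Sj; apply/imfsetP; exists u.
  - rewrite prodV; apply/orP; left; apply/orP; right; apply/imfsetP; exists (v j) => //.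
    by apply/imfsetP; exists v.
  - by rewrite prod1 eqxx !orbT.
set M := (\max_j #|` W j|)%nat.
have hcount : (#|` ball_gen S n| <= expn M m)%nat.
  apply: (@inj_count _ m (ball_gen S n) (fun (x : PG) (j : 'I_m) => index (x j) (W j)) M).
    move=> x y xb yb hxy; apply: prod_eq => j.
    by rewrite -(nth_index (x j) (hbox x xb j)) hxy nth_index // hbox.
  move=> x xb j; apply: (leq_trans _ (leq_bigmax j)).
  by rewrite index_mem hbox.
have n1 : (0 < n)%nat by rewrite /n leq_max orbT.
have hn0 : (N0 <= n)%nat by rewrite /n !leq_max leqnn.
have hnf j : (Nf j <= n)%nat.
  by rewrite /n (leq_trans (leq_bigmax j)) // !leq_max leqnn !orbT.
have hl := hlow n hn0 n1.
have lc0 : 0 < ln c by rewrite ln_gt0.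
have hM : ln (ballc S n) <= m%:R * (e * n%:R).
  case: (posnP m) => m0.
    have e1 : expn M m = 1%nat by rewrite m0.
    have e2 : m%:R = 0 :> R by rewrite m0.
    rewrite e1 in hcount; rewrite e2 mul0r.
    have bp := ballc_gt0 S n.
    rewrite -ln1 ler_ln ?posrE // /ballc.
    by have h := hcount; rewrite -(ler_nat R) in h; exact: h.
  have m0' : (0 < #|'I_m|)%nat by rewrite card_ord.
  have [j0 hj0] := @bigop.eq_bigmax _ (fun j => #|` W j|) m0'.
  rewrite -/M in hj0.
  have M0 : (0 < M)%nat.
    rewrite hj0 /W; case: ifP => _; first by rewrite cardfs1.
    by apply: card_fset_pow_gt0; rewrite !inE eqxx !orbT.
  have h1 : ln (ballc S n) <= m%:R * ln (M%:R).
    rewrite mulr_natl -lnXn ?ltr0n // ler_ln ?posrE ?ballc_gt0 ?exprn_gt0 ?ltr0n //.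
    by rewrite -natrX /ballc ler_nat.
  apply: (le_trans h1); rewrite ler_pM2l ?ltr0n // hj0 /W.
  case: ifP => jI; first by rewrite cardfs1 ln1 mulr_ge0 // ltW.
  by apply: hNf; [rewrite jI | exact: hnf].
have hfrac : m%:R / (m.+1)%:R < 1 :> R by rewrite ltr_pdivrMr ?ltr0n // mul1r ltr_nat.
have : m%:R * (e * n%:R) = (m%:R / (m.+1)%:R) * (ln c * n%:R) by rewrite /e; ring.
move=> he; rewrite he in hM.
have hcn : 0 < ln c * n%:R by rewrite mulr_gt0 ?ltr0n.
have : m%:R / (m.+1)%:R * (ln c * n%:R) < ln c * n%:R.
  by rewrite -[X in _ < X]mul1r ltr_pM2r.
move=> h2; have := lt_le_trans hl (le_trans hM (ltW h2)); by rewrite ltxx.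
Qed.

End Prod.

End PC.
Import PC.

Module PD.



Lemma size_enum_seq (T : choiceType) (s : seq T) : uniq s ->
  size (enum_finmem (mem_fin (fin_finpred s))) = size s.
Proof.
move=> us; apply/perm_size/uniq_perm; [exact: enum_finmem_uniq| exact: us | ].
by move=> x; rewrite enum_finmemE.
Qed.

Lemma fin_order (G : groupType) (K : set G) (z : G) :
  finite_set K -> K 1%g -> (forall x y, K x -> K y -> K (x * y)%g) -> K z ->
  exists2 k, (0 < k)%nat & (z ^+ k)%g = 1%g.
Proof.
move=> /finite_fsetP [F ->] K1 KM Kz.
have Kp j : (z ^+ j)%g \in F.
  elim: j => [|j IH]; first exact: K1.
  by rewrite expgS; apply: KM.
have [[j [j' [jj' hj]]]|nj] := boolp.pselect (exists j j', (j < j' <= #|` F|)%nat /\ (z ^+ j = z ^+ j')%g).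
  exists (j' - j)%nat; first by rewrite subn_gt0; case/andP: jj'.
  by rewrite expgnFr ?hj ?mulgV //; case/andP: jj' => /ltnW.
exfalso.
have hsub : ([fset (z ^+ j)%g | j in iota 0 (#|` F|).+1] `<=` F)%fset.
  by apply/fsubsetP => x /imfsetP [j _ ->].
have := fsubset_leq_card hsub; rewrite card_in_imfset.
  by rewrite size_enum_seq ?iota_uniq // size_iota ltnn.
move=> j j'; rewrite !mem_iota /= !add0n !ltnS => hj hj' e.
case: (ltngtP j j') => // hlt; exfalso; apply: nj.
  by exists j, j'; rewrite hlt hj'.
by exists j', j; rewrite hlt hj.
Qed.

Local Open Scope ring_scope.

Lemma powR_le1 (a y : R) : 0 <= a <= 1 -> 0 <= y -> powR a y <= 1.
Proof.
case/andP => a0 a1 y0; rewrite /powR; case: ifP => [_|an0].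
  by case: (y == 0); rewrite ?ler01 ?lexx.
by rewrite expR_le1 mulr_ge0_le0 // ln_le0.
Qed.




End PD.
Import PD.

Local Open Scope classical_set_scope.
Local Open Scope ring_scope.

Theorem proposition2p28 (m : nat) (Gs : 'I_m -> groupType)
  (hvtf : forall i : 'I_m, virtually_torsion_free (Gs i))
  (alpha beta : R) (halpha : 0 < alpha) (hbeta : 0 < beta)
  (hgrowth : forall (i : 'I_m) (V : {fset Gs i}),
     has_exp_growth (gen [set x | x \in V]) ->
     forall n : nat,
       powR (alpha * (#|` V|%:R)) (beta * n%:R) <= (#|` fset_pow V n|%:R)) :
  exists alpha' beta' : R, [/\ 0 < alpha', 0 < beta' &
    forall U : {fset prodG Gs},
      (exists H1 H2 : set (prodG Gs),
        [/\ is_subgroup H1 /\ is_subgroup H2,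
            (forall h1 h2, H1 h1 -> H2 h2 -> (h1 * h2 = h2 * h1)%g)
              /\ (forall x, H1 x -> H2 x -> x = 1%g),
            gen [set x | x \in U] `<=`
              [set x | exists h1 h2, [/\ H1 h1, H2 h2 & x = (h1 * h2)%g]],
            ~ has_exp_growth H2 &
            (* kernel of the projection H1 x H2 -> H1 restricted to <U> *)
            infinite_set (gen [set x | x \in U] `&` H2)])
      \/
      (forall n : nat,
         powR (alpha' * (#|` U|%:R)) (beta' * n%:R) <= (#|` fset_pow U n|%:R))].
Proof.
pose Hs i := projT1 (cid (hvtf i)).
have pH i : [/\ is_subgroup (Hs i), finite_index (Hs i) & torsion_free (Hs i)].
  exact: (projT2 (cid (hvtf i))).
have fi i : finite_index (Hs i) by case: (pH i).
pose ss i := projT1 (cid (fi i)).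
have hss i g : exists2 t, t \in ss i & Hs i (t^-1 * g)%g by exact: (projT2 (cid (fi i))).
pose B := (\max_i size (ss i))%nat.
pose Cst := (expn B m.+1).+1.
pose a' := Num.min (alpha ^+ m.+1) (Cst%:R)^-1.
pose b' := beta / (m.+1)%:R.
have a'0 : 0 < a' by rewrite lt_min exprn_gt0 // invr_gt0 ltr0n.
have b'0 : 0 < b' by rewrite divr_gt0 // ltr0n.
exists a', b'; split => // U.
pose V i := [fset (u : prodG Gs) i | u in U]%fset.
pose I := [set i | `[< has_exp_growth (gen [set y | y \in V i]) >]]%SET.
have hI i : i \in I <-> has_exp_growth (gen [set y | y \in V i]).
  by rewrite inE; split => [/asboolP|/asboolP].
pose H2 := H2set I V.
have H2s : is_subgroup H2 := H2_subgroup I V.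
have genU x : gen [set x | x \in U] x -> forall i, gen [set y | y \in V i] (x i).
  apply: (gen_min (H := [set x : prodG Gs | forall i, gen [set y | y \in V i] (x i)])).
    split; first by move=> i; rewrite prod1; case: (gen_subgroup [set y | y \in V i]).
    split.
      move=> x1 x2 h1 h2 i; rewrite prodM.
      by case: (gen_subgroup [set y | y \in V i]) => _ [hM _]; apply: hM.
    move=> x1 h1 i; rewrite prodV.
    by case: (gen_subgroup [set y | y \in V i]) => _ [_ hV]; apply: hV.
  move=> u uU i; apply: gen_sub => /=; apply/imfsetP; exists u => //.
case: (boolp.pselect (finite_set (gen [set x | x \in U] `&` H2))) => hfin; last first.
  left; exists [set x : prodG Gs | forall i, i \notin I -> x i = 1%g], H2.
  split => //.
  - split => //; split; first by move=> i _; rewrite prod1.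
    split.
      by move=> x y hx hy i iI; rewrite prodM hx ?hy ?mulg1.
    by move=> x hx i iI; rewrite prodV hx ?invg1.
  - split.
      move=> h1 h2 hh1 hh2; apply: prod_eq => i; rewrite !prodM.
      case: (boolP (i \in I)) => iI; first by rewrite (hh2 i).1 // mulg1 mul1g.
      by rewrite hh1 // mulg1 mul1g.
    move=> x hx1 hx2; apply: prod_eq => i; rewrite prod1.
    case: (boolP (i \in I)) => iI; first by rewrite (hx2 i).1.
    by rewrite hx1.
  - move=> x hx.
    exists [ffun i => if i \in I then x i else 1%g], [ffun i => if i \in I then 1%g else x i].
    split.
    + by move=> i iI; rewrite ffunE (negbTE iI).
    + move=> i; rewrite ffunE; split => iI; first by rewrite iI.
      by rewrite (negbTE iI); apply: genU.
    + apply: prod_eq => i; rewrite prodM !ffunE.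
      by case: (i \in I); rewrite ?mulg1 ?mul1g.
  - apply: H2_noexp => i iI hexp; move: iI; rewrite (_ : i \in I); first by [].
    by apply/hI.
right.
have Vin u i : u \in U -> u i \in V i by move=> uU; apply/imfsetP; exists u.
have hp i w : has (fun t => `[< Hs i (t^-1 * w)%g >]) (ss i).
  by have [t ts ht] := hss i w; apply/hasP; exists t => //; apply/asboolP.
pose A := (\max_(i in I) #|` V i|)%nat.
pose code (u : prodG Gs) (i : 'I_m) :=
  if i \in I then index (u i) (V i) else find (fun t => `[< Hs i (t^-1 * u i)%g >]) (ss i).
have hcount : (#|` U| <= expn (maxn A B) m)%nat.
  apply: (@inj_count _ m U code (maxn A B)); last first.
    move=> u uU i; rewrite /code; case: ifP => iI.
      rewrite (leq_trans _ (leq_maxl _ _)) // (leq_trans _ (leq_bigmax_cond _ iI)) //.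
      by rewrite index_mem Vin.
    rewrite (leq_trans _ (leq_maxr _ _)) // (leq_trans _ (leq_bigmax i)) //.
    by rewrite -has_find.
  move=> u u' uU u'U hc.
  set z := (u^-1 * u')%g.
  have hzi i : i \in I -> z i = 1%g.
    move=> iI; have := hc i; rewrite /code iI => e.
    have e2 : u' i = u i.
      by rewrite -(nth_index (u i) (Vin u' i u'U)) -e nth_index // Vin.
    by rewrite /z prodM prodV e2 mulVg.
  have hzH i : i \notin I -> Hs i (z i).
    move=> iI; have := hc i; rewrite /code (negbTE iI) => e.
    set t := nth 1%g (ss i) (find (fun t => `[< Hs i (t^-1 * u i)%g >]) (ss i)).
    have Hu : Hs i (t^-1 * u i)%g by apply/asboolP; apply: (nth_find 1%g (hp i (u i))).
    have Hu' : Hs i (t^-1 * u' i)%g.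
      by rewrite /t e; apply/asboolP; apply: (nth_find 1%g (hp i (u' i))).
    have -> : z i = ((t^-1 * u i)^-1 * (t^-1 * u' i))%g.
      by rewrite /z prodM prodV invgM invgK mulgA mulgK.
    case: (pH i) => [[_ [hM hV]] _ _]; apply: hM => //; exact: hV.
  have gU : is_subgroup (gen [set x | x \in U]) := gen_subgroup _.
  have Kz : (gen [set x | x \in U] `&` H2) z.
    split.
      case: gU => _ [hM hV]; apply: hM; first apply: hV.
        by apply: gen_sub.
      by apply: gen_sub.
    move=> i; split; first exact: hzi.
    move=> iI; rewrite /z prodM prodV.
    case: (gen_subgroup [set y | y \in V i]) => _ [hM hV].
    by apply: hM; [apply: hV|]; apply: gen_sub; rewrite /= Vin.
  have K1 : (gen [set x | x \in U] `&` H2) 1%g.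
    by split; [case: gU | case: H2s].
  have KM x y : (gen [set x | x \in U] `&` H2) x -> (gen [set x | x \in U] `&` H2) y ->
      (gen [set x | x \in U] `&` H2) (x * y)%g.
    case=> gx hx [gy hy]; split; first by case: gU => _ [hM _]; apply: hM.
    by case: H2s => _ [hM _]; apply: hM.
  have [k k0 hk] := fin_order hfin K1 KM Kz.
  have z1 : z = 1%g.
    apply: prod_eq => i; rewrite prod1.
    case: (boolP (i \in I)) => iI; first exact: hzi.
    case: (pH i) => _ _ htf; apply: (htf _ k (hzH i iI) k0).
    by rewrite -prodX hk prod1.
  by move: z1; rewrite /z => /mulg1_eq; rewrite invgK.
move=> n.
have hb'n : 0 <= b' * n%:R by rewrite mulr_ge0 // ltW.
have a'0' : 0 <= a' * #|` U|%:R by rewrite mulr_ge0 // ltW.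
case: (lerP (a' * #|` U|%:R) 1) => ha.
  case: (fset_0Vmem U) => [U0 | [u0 u0U]].
    rewrite U0 cardfs0 mulr0.
    case: n hb'n => [|n] _; first by rewrite mulr0 powRr0 /= cardfs1.
    rewrite powR0 ?ler0n // mulf_neq0 ?pnatr_eq0 // lt0r_neq0 //.
  apply: (le_trans (powR_le1 _ _)); first by rewrite a'0' ha.
    exact: hb'n.
  have hx : (u0 ^+ n)%g \in fset_pow U n.
    elim: n {ha hb'n} => [|n IH]; first by rewrite /= inE.
    by rewrite expgS; apply/in_fset_mulP; exists u0, (u0 ^+ n)%g.
  by rewrite ler1n cardfs_gt0; apply/fset0Pn; exists (u0 ^+ n)%g.
set X := #|` U| in ha a'0' *.
have hXC : (Cst < X)%nat.
  rewrite -(ltr_nat R); have : a' <= Cst%:R^-1 by rewrite /a' ge_min lexx orbT.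
  move=> h; have := lt_le_trans ha (ler_wpM2r (ler0n _ _) h).
  by rewrite mulrC ltr_pdivlMr ?ltr0n // mul1r.
have AB : (B < A)%nat.
  rewrite ltnNge; apply/negP => hAB.
  move: hcount; rewrite (maxn_idPr hAB) => hX.
  have : (expn B m <= Cst)%nat.
    rewrite /Cst; case: (posnP B) => B0.
      by rewrite B0; case: (m) => [|k] //; rewrite !exp0n.
    by apply: leqW; apply: leq_pexp2l.
  by move=> h; move: (leq_trans hX h); rewrite leqNgt hXC.
move: hcount; rewrite (maxn_idPl (ltnW AB)) => hXA.
have A0 : (0 < A)%nat by apply: leq_ltn_trans AB.
have [i0 i0I] : exists i0, i0 \in I.
  case: (set_0Vmem I) => [I0|[i0 i0I]]; last by exists i0.
  by move: A0; rewrite /A I0 big_set0.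
have cI : (0 < #|I|)%nat by apply/card_gt0P; exists i0.
have [j jI hA] := @eq_bigmax_cond _ (fun i => i \in I) (fun i => #|` V i|) cI.
rewrite -/A in hA.
have hg := hgrowth j (V j) ((hI j).1 jI) n.
have hVU : (#|` fset_pow (V j) n| <= #|` fset_pow U n|)%nat.
  have := card_fset_pow_hom (fun x y : prodG Gs => @prodM m Gs x y j) (@prod1 m Gs j) U n; apply.
apply: (le_trans _ (le_trans hg _)); last by rewrite ler_nat.
rewrite -hA.
have hαA : 0 <= alpha * A%:R by rewrite mulr_ge0 // ltW.
have e1 : beta * n%:R = (m.+1)%:R * (b' * n%:R).
  by rewrite /b'; field; rewrite addrC natr1 pnatr_eq0.
rewrite e1 [X in _ <= X]powRrM (powR_mulrn _ hαA).
apply: (ge0_ler_powR hb'n); rewrite ?nnegrE ?exprn_ge0 //.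
rewrite exprMn; apply: ler_pM; rewrite ?ler0n //; first exact: ltW.
  by rewrite /a' ge_min lexx.
rewrite -natrX ler_nat (leq_trans hXA) //.
by apply: leq_pexp2l.
Qed.
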